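(* Let $G=(V,E)$ be a finite simple undirected graph, let $M$ be computed by a run of \textsc{MinGreedy} on $G$, and let $M^*$ be a maximum matching such that each component of $(V,M\cup M^* )$ with an edge is an edge of $M\cap M^*$ or an $M$-$M^*$-path. Let $w$ be an endpoint of an $M$-$M^*$-path $X$. Then $w$ is the target of at least one transfer, and $X$ (i.e. its two endpoints together) is the target of at least two transfers.
   Context: \textsc{MinGreedy}: starting with $M=\emptyset$, repeatedly select an arbitrary node $u$ of minimum non-zero current degree and an arbitrary neighbor $v$ of $u$, add $\{u,v\}$ to $M$ and remove all edges incident with $u$ or $v$ from the current graph. An $M$-$M^*$-path is a component of $(V,M\cup M^* )$ that is an alternating path starting and ending with an $M^*$-edge, with $m\geq1$ edges of $M$ and $m+1$ edges of $M^*$; its endpoints are its two $M$-uncovered end nodes. Let $F=E\setminus(M\cup M^* )$. For an endpoint $w$ of an $M$-$M^*$-path, an edge $\{v,w\}\in F$ is a transfer from $v$ to $w$ if, in the step of the algorithm in which $v$ is matched, the current degree of $w$ drops to at most $1$. *)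

(* Defs.v *)
From mathcomp Require Import all_boot.
Set Implicit Arguments. Unset Strict Implicit. Unset Printing Implicit Defensive.

Section MinGreedy.
Variables (T : finType) (e : rel T).

Definition edges : {set {set T}} := [set f : {set T} | [exists x, exists y, e x y && (f == [set x; y])]].

Definition is_matching (N : {set {set T}}) : bool :=
  (N \subset edges) &&
  [forall f in N, forall g in N, (f != g) ==> [disjoint f & g]].

Definition is_max_matching (N : {set {set T}}) : Prop :=
  is_matching N /\ forall N', is_matching N' -> #|N'| <= #|N|.

(* a run of MinGreedy is the sequence of selected pairs (u,v): u is the
   minimum-nonzero-degree node, v its chosen neighbour *)
Definition matched (p : seq (T * T)) : seq T :=
  [seq a.1 | a <- p] ++ [seq a.2 | a <- p].

(* adjacency in the current graph after the steps p *)
Definition cur (p : seq (T * T)) (x y : T) : bool :=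
  [&& e x y, x \notin matched p & y \notin matched p].

Definition cdeg (p : seq (T * T)) (x : T) : nat := #|[set y | cur p x y]|.

Definition mingreedy_run (s : seq (T * T)) : Prop :=
  (forall p u v r, s = p ++ (u, v) :: r ->
     [/\ cur p u v, 0 < cdeg p u &
         forall x, 0 < cdeg p x -> cdeg p u <= cdeg p x]) /\
  (forall x y, ~~ cur s x y).

Definition matching_of (s : seq (T * T)) : {set {set T}} :=
  [set [set a.1; a.2] | a in s].

Definition covered (N : {set {set T}}) (x : T) : bool := [exists f in N, x \in f].

(* M-Mstar-path with vertex sequence x :: q (its endpoints are x and last x q):
   distinct vertices, first/odd-position edges in Mstar, the others in M,
   m >= 1 edges of M, and both endpoints M-uncovered (so that it is a
   whole component of (V, M \cup Mstar)). *)
Definition mmpath (M Ms : {set {set T}}) (x : T) (q : seq T) : bool :=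
  [&& uniq (x :: q), 3 <= size q, odd (size q),
      all (fun i => let f := [set nth x (x :: q) i; nth x q i] in
                    if odd i then f \in M else f \in Ms) (iota 0 (size q)),
      ~~ covered M x & ~~ covered M (last x q)].

(* {v,w} is a transfer from v to w : {v,w} \in F = E \ (M \cup Mstar) and, in the
   step in which v is matched, the current degree of w becomes <= 1. *)
Definition transfer (s : seq (T * T)) (Ms : {set {set T}}) (v w : T) : bool :=
  ([set v; w] \in edges :\: (matching_of s :|: Ms)) &&
  [exists i : 'I_(size s),
     let uv := nth (v, v) s i in
     ((v == uv.1) || (v == uv.2)) && (cdeg (take i.+1 s) w <= 1)].

Definition ntransfers (s : seq (T * T)) (Ms : {set {set T}}) (w : T) : nat :=
  #|[set v | transfer s Ms v w]|.

End MinGreedy.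

(* Main.v *)
Require Import Defs.
From mathcomp Require Import all_boot zify.
Set Implicit Arguments. Unset Strict Implicit. Unset Printing Implicit Defensive.

Section Aux.
Variables (T : finType) (e : rel T) (e_sym : symmetric e) (e_irr : irreflexive e).
Variable (s : seq (T * T)) (Hrun : mingreedy_run e s).

Definition hit (y : T) (a : T * T) := (y == a.1) || (y == a.2).

Lemma matchedE p y : (y \in matched p) = has (hit y) p.
Proof.
rewrite /matched mem_cat; apply/idP/hasP.
  by case/orP=> /mapP[a Ha ->]; exists a; rewrite // /hit eqxx ?orbT.
by case=> a Ha /orP[]/eqP->; [rewrite (map_f (fun a => a.1)) | rewrite (map_f (fun a => a.2)) ?orbT].
Qed.

Lemma step k d : k < size s ->
  [/\ cur e (take k s) (nth d s k).1 (nth d s k).2, 0 < cdeg e (take k s) (nth d s k).1 &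
      forall x, 0 < cdeg e (take k s) x -> cdeg e (take k s) (nth d s k).1 <= cdeg e (take k s) x].
Proof.
move=> hk; apply: (Hrun.1 _ _ _ (drop k.+1 s)).
by rewrite -surjective_pairing -drop_nth // cat_take_drop.
Qed.

Lemma cur_hit p u v y : cur e p u v -> hit y (u, v) -> y \notin matched p.
Proof. by case/and3P=> _ hu hv /orP[]/eqP->. Qed.

Lemma mono k k' y : k <= k' -> y \in matched (take k s) -> y \in matched (take k' s).
Proof.
move=> le; rewrite !matchedE -(subnKC le) takeD has_cat => ->; by [].
Qed.

Lemma matched_take y k : y \in matched (take k s) -> y \in matched s.
Proof. by rewrite !matchedE -{2}(cat_take_drop k s) has_cat => ->. Qed.

Lemma matched_succ k y d : k < size s ->
  (y \in matched (take k.+1 s)) = (y \in matched (take k s)) || hit y (nth d s k).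
Proof. by move=> hk; rewrite !matchedE (take_nth d hk) has_rcons orbC. Qed.

Lemma uniq_hit k k' y d : k < size s -> k' < size s ->
  hit y (nth d s k) -> hit y (nth d s k') -> k = k'.
Proof.
have main : forall k k', k < k' -> k' < size s -> hit y (nth d s k) -> hit y (nth d s k') -> False.
  move=> a b ab hb ha hb'.
  have [c _ _] := step d hb.
  have := cur_hit c; rewrite -surjective_pairing => /(_ _ hb') /negP; apply.
  rewrite matchedE; apply/hasP; exists (nth d s a) => //.
  rewrite -(nth_take d ab); apply: mem_nth; rewrite size_take hb //.
move=> hk hk' h h'; case: (ltngtP k k') => // [lt|lt].
  by case: (main _ _ lt hk' h h').
by case: (main _ _ lt hk h' h).
Qed.

Lemma cross (Q : nat -> bool) N : ~~ Q 0 -> Q N -> exists k, [/\ k < N, ~~ Q k & Q k.+1].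
Proof.
elim: N => [h0 hN|N IH h0 hN]; first by rewrite hN in h0.
case hQ: (Q N); last by exists N; rewrite hQ.
by have [k [kN nk qk]] := IH h0 hQ; exists k; split => //; apply: ltnW.
Qed.

Lemma coveredE y : covered (matching_of s) y = (y \in matched s).
Proof.
rewrite matchedE; apply/existsP/hasP.
  case=> f /andP[/imsetP[a Ha ->]]; rewrite !inE => hy; by exists a.
case=> a Ha hy; exists [set a.1; a.2]; rewrite !inE; apply/andP; split; [exact: (imset_f (fun a : T * T => [set a.1; a.2]))|exact: hy].
Qed.

Lemma edge_e a b : [set a; b] \in edges e -> e a b.
Proof.
rewrite inE => /existsP[x /existsP[y /andP[exy /eqP E]]].
have ha : a \in [set x; y] by rewrite -E set21.
have hb : b \in [set x; y] by rewrite -E set22.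
have hy : y \in [set a; b] by rewrite E set22.
have hx : x \in [set a; b] by rewrite E set21.
have eyx : e y x by rewrite e_sym.
case/set2P: ha => ha; case/set2P: hb => hb; rewrite ha hb //.
- by move: hy; rewrite ha hb => /set2P[] yx; move: exy; rewrite yx e_irr.
- by move: hx; rewrite ha hb => /set2P[] yx; move: exy; rewrite yx e_irr.
Qed.

Lemma M_edges f : f \in matching_of s -> f \in edges e.
Proof.
case/imsetP=> a Ha ->.
have hk : index a s < size s by rewrite index_mem.
have [/and3P[c _ _] _ _] := step a hk; rewrite nth_index // in c.
by rewrite inE; apply/existsP; exists a.1; apply/existsP; exists a.2; rewrite c eqxx.
Qed.


Section Core.
Variables (Ms : {set {set T}}) (HMsm : is_matching e Ms) (P : nat -> T) (m : nat).
Hypothesis hm : 0 < m.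
Let n := m.*2.+1.
Hypothesis Pinj : forall i j, i <= n -> j <= n -> P i = P j -> i = j.
Hypothesis Hedge : forall i, i < n ->
  if odd i then [set P i; P i.+1] \in matching_of s else [set P i; P i.+1] \in Ms.
Hypothesis H0 : P 0 \notin matched s.
Hypothesis HN : P n \notin matched s.
Let d := (P 0, P 0).

Lemma ePP i : i < n -> e (P i) (P i.+1).
Proof.
move=> hi; have := Hedge hi; case: (odd i) => h; apply: edge_e.
  exact: M_edges h.
exact: (subsetP (andP HMsm).1) _ h.
Qed.

Lemma Pneq a b : a <= n -> b <= n -> a != b -> P a != P b.
Proof. by move=> ha hb; apply: contra => /eqP /(Pinj ha hb) ->. Qed.

Lemma medge i : i < m -> exists k, k < size s /\ [set (nth d s k).1; (nth d s k).2] = [set P i.*2.+1; P i.*2.+2].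
Proof.
move=> im; have h : i.*2.+1 < n by rewrite /n; lia.
have := Hedge h.
rewrite /= odd_double /= => /imsetP[a Ha E].
by exists (index a s); rewrite nth_index // index_mem E.
Qed.

Lemma set_unm p u v a b : [set u; v] = [set a; b] -> cur e p u v ->
  a \notin matched p /\ b \notin matched p.
Proof.
move=> E /and3P[_ hu hv]; split.
  have : a \in [set u; v] by rewrite E set21.
  by case/set2P => ->.
have : b \in [set u; v] by rewrite E set22.
by case/set2P => ->.
Qed.

Lemma H0p k : P 0 \notin matched (take k s).
Proof. by apply: contra H0; apply: matched_take. Qed.

Lemma two p b a c : a != c -> cur e p b a -> cur e p b c -> 1 < cdeg e p b.
Proof.
move=> ac ha hc; apply: (@leq_trans #|[set a; c]|); first by rewrite cards2 ac.
by apply: subset_leq_card; apply/subsetP => z; rewrite !inE => /orP[]/eqP->.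
Qed.

Lemma core i k : i < m -> k < size s ->
  [set (nth d s k).1; (nth d s k).2] = [set P i.*2.+1; P i.*2.+2] ->
  P i.*2 \notin matched (take k s) -> P 1 \notin matched (take k s) ->
  (forall y, e (P 0) y -> y = P 1) -> P i.*2.+3 \in matched (take k s).
Proof.
move=> im hk E h0 h1 N.
have [c pos mn] := step d hk.
have [hj hj1] := set_unm E c.
move: E c pos mn hj hj1 h0 h1.
set p := take k s; set u := (nth d s k).1; set v := (nth d s k).2.
move=> E c pos mn hj hj1 h0 h1.
have deg0 : cdeg e p (P 0) <= 1.
  rewrite /cdeg; apply: (@leq_trans #|[set P 1]|); last by rewrite cards1.
  apply: subset_leq_card; apply/subsetP => y; rewrite !inE => /and3P[ey _ _].
  by rewrite (N _ ey).
have pos0 : 0 < cdeg e p (P 0).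
  apply/card_gt0P; exists (P 1); rewrite inE /cur ePP ?H0p ?h1 //; rewrite /n; lia.
have du := leq_trans (mn _ pos0) deg0.
have : u \in [set P i.*2.+1; P i.*2.+2] by rewrite -E set21.
case/set2P => hu.
  exfalso; move: du; rewrite leqNgt => /negP; apply.
  apply: (@two p u (P i.*2) (P i.*2.+2)).
  - by apply: Pneq; rewrite /n; lia.
  - by rewrite /cur hu e_sym ePP ?hj ?h0 //; rewrite /n; lia.
  - by rewrite /cur hu ePP ?hj ?hj1 //; rewrite /n; lia.
apply: contraT => hn; exfalso.
move: du; rewrite leqNgt => /negP; apply.
apply: (@two p u (P i.*2.+1) (P i.*2.+3)).
- by apply: Pneq; rewrite /n; lia.
- by rewrite /cur hu e_sym ePP ?hj ?hj1 //; rewrite /n; lia.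
- by rewrite /cur hu ePP ?hj1 ?hn //; rewrite /n; lia.
Qed.


Lemma inv (N : forall y, e (P 0) y -> y = P 1) i : i < m -> exists k,
  [/\ k < size s, [set (nth d s k).1; (nth d s k).2] = [set P i.*2.+1; P i.*2.+2],
      P i.*2 \notin matched (take k s) & P 1 \notin matched (take k s)].
Proof.
elim: i => [|i IH] im.
  have [k [hk E]] := medge im; exists k; split => //; first exact: H0p.
  by have [c _ _] := step d hk; case: (set_unm E c).
have [k [hk E h0 h1]] := IH (ltnW im).
have hc := core (ltnW im) hk E h0 h1 N.
have [k' [hk' E']] := medge im.
have [c' _ _] := step d hk'; have [n1 n2] := set_unm E' c'.
have [c _ _] := step d hk; have [m1 m2] := set_unm E c.
rewrite doubleS in E' n1 n2 *.
have kk : k' < k.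
  rewrite ltnNge; apply/negP => le; by rewrite (mono le hc) in n1.
exists k'; split => //.
  by apply: contra m2; apply: mono; apply: ltnW.
by apply: contra h1; apply: mono; apply: ltnW.
Qed.

Lemma endpoint_transfer : 0 < ntransfers e s Ms (P 0).
Proof.
have [y0 /andP[ey0 ny0]] : exists y, e (P 0) y && (y != P 1).
  apply/existsP; apply: contraT; rewrite negb_exists => /forallP hN.
  have N : forall y, e (P 0) y -> y = P 1.
    by move=> y ey; move: (hN y); rewrite ey /= negbK => /eqP.
  have im : m.-1 < m by lia.
  have [k [hk E h0 h1]] := inv N im.
  have := core im hk E h0 h1 N.
  rewrite (_ : (m.-1).*2.+3 = n); last by rewrite /n; lia.
  by move/matched_take; rewrite (negbTE HN).
set Q := fun k => [forall y, (e (P 0) y && (y != P 1)) ==> (y \in matched (take k s))].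
have q0 : ~~ Q 0.
  by apply/forallP => /(_ y0); rewrite ey0 ny0 take0 /=.
have qN : Q (size s).
  apply/forallP => y; apply/implyP => /andP[ey _]; rewrite take_size.
  have := Hrun.2 (P 0) y; rewrite /cur ey H0 /=; by rewrite negbK.
have [k [hk nQ Q1]] := @cross Q (size s) q0 qN.
move: nQ; rewrite /Q negb_forall => /existsP[y]; rewrite negb_imply => /andP[/andP[ey ny] hy].
have hity : hit y (nth (y, y) s k).
  move: (implyP (forallP Q1 y)); rewrite ey ny => /(_ isT).
  by rewrite (matched_succ _ (y, y) hk) (negbTE hy).
apply/card_gt0P; exists y; rewrite inE /transfer; apply/andP; split.
  rewrite in_setD in_setU negb_or -andbA; apply/and3P; split.
  - apply/negP => hM; move: H0; rewrite -coveredE => /negP; apply.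
    by apply/existsP; exists [set y; P 0]; rewrite hM set22.
  - apply/negP => hMs.
    have h0 : [set P 0; P 1] \in Ms.
      by have := Hedge (i := 0) ltac:(by []).
    move: (andP HMsm).2 => /forallP /(_ [set y; P 0]) /implyP /(_ hMs).
    move=> /forallP /(_ [set P 0; P 1]) /implyP /(_ h0).
    case: eqVneq => [Efg _ | _ /= dj].
      have : y \in [set P 0; P 1] by rewrite -Efg set21.
      case/set2P => Ey; first by rewrite Ey e_irr in ey.
      by rewrite Ey eqxx in ny.
    by move: (disjointFr dj (set22 y (P 0))); rewrite set21.
  - rewrite inE; apply/existsP; exists y; apply/existsP; exists (P 0).
    by rewrite e_sym ey eqxx.
apply/existsP; exists (Ordinal hk) => /=; apply/andP; split; first exact: hity.
rewrite /cdeg; apply: (@leq_trans #|[set P 1]|); last by rewrite cards1.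
apply: subset_leq_card; apply/subsetP => z; rewrite !inE => /and3P[ez _ hz].
apply: contraTT hz => nz; rewrite negbK.
by move: (implyP (forallP Q1 z)); rewrite ez nz => /(_ isT).
Qed.

End Core.
End Aux.

Unset Implicit Arguments. Set Strict Implicit.
Theorem lemma5 (T : finType) (e : rel T)
  (e_sym : symmetric e) (e_irr : irreflexive e)
  (s : seq (T * T)) (Hrun : mingreedy_run e s)
  (Ms : {set {set T}}) (HMs : is_max_matching e Ms)
  (Hcomp : forall y, covered (matching_of s :|: Ms) y ->
     [exists f in matching_of s :&: Ms, y \in f] \/
     exists x q, mmpath (matching_of s) Ms x q /\ y \in x :: q)
  (x : T) (q : seq T) (HX : mmpath (matching_of s) Ms x q) :
  (forall w, (w = x \/ w = last x q) -> 1 <= ntransfers e s Ms w) /\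
  2 <= ntransfers e s Ms x + ntransfers e s Ms (last x q).
Proof.
have HMsm := HMs.1.
move: HX; rewrite /mmpath => /andP[un /andP[s3 /andP[od /andP[Hall /andP[cx cl]]]]].
set m := (size q)./2.
have nq : size q = m.*2.+1.
  by rewrite -[LHS]odd_double_half od add1n.
have hm : 0 < m by lia.
have Hlast : last x q = nth x (x :: q) (size q) by have := nth_last x (x :: q).
rewrite coveredE in cx; rewrite coveredE Hlast in cl.
have inj : forall i j, i <= size q -> j <= size q ->
    nth x (x :: q) i = nth x (x :: q) j -> i = j.
  by move=> i j hi hj /eqP; rewrite nth_uniq //= ?ltnS // => /eqP.
have Hi : forall i, i < size q -> if odd i then
    [set nth x (x :: q) i; nth x (x :: q) i.+1] \in matching_of s
    else [set nth x (x :: q) i; nth x (x :: q) i.+1] \in Ms.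
  by move=> i hi; have := allP Hall i; rewrite mem_iota /= => /(_ hi).
have t1 : 0 < ntransfers e s Ms x.
  have := @endpoint_transfer T e e_sym e_irr s Hrun Ms HMsm (fun i => nth x (x :: q) i) m hm.
  rewrite -nq; apply => //.
have t2 : 0 < ntransfers e s Ms (last x q).
  have := @endpoint_transfer T e e_sym e_irr s Hrun Ms HMsm
    (fun i => nth x (x :: q) (size q - i)) m hm.
  rewrite -nq subn0 -Hlast subnn; apply.
  - by move=> i j hi hj /inj; lia.
  - move=> i hi; have hj : size q - i.+1 < size q by lia.
    have := Hi _ hj.
    rewrite (_ : (size q - i.+1).+1 = size q - i); last by lia.
    rewrite oddB // nq /= odd_double /= negbK setUC; by [].
  - by rewrite Hlast.
  - by [].
split; last by rewrite -(addn1 1) leq_add.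
by move=> w [->|->].
Qed.
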